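(* There is no sequence $(a_n)_{n\ge0}$ of positive integers such that the graph $G=G((a_n)_{n\ge0})$ satisfies $p_{\mathrm{cut,E}}(G)<p_{\mathrm{cut,V}}(G)$.
   Context: For a sequence $(a_n)_{n\ge0}$ of positive integers, $G((a_n)_{n\ge0})$ is the multigraph with vertex set $\mathbb{N}=\{0,1,2,\dots\}$ and, for each $n\ge0$, exactly $a_n$ parallel edges between $n$ and $n+1$ (and no other edges). For a locally finite, connected, infinite (multi)graph $G=(V,E)$ and a vertex $x$ (the thresholds below do not depend on $x$; one may take $x=0$), consider Bernoulli$(p)$ bond percolation (each edge open independently with probability $p$), with law $\mathbb{P}_p$, expectation $\mathbb{E}_p$, and open cluster $C(x)$ of $x$. A vertex cutset separating $x$ from infinity is a set $\Pi_V\subset V$ such that the connected component of $x$ in $G$ with the vertices of $\Pi_V$ deleted is finite; an edge cutset is a set $\Pi_E\subset E$ such that the component of $x$ in $G$ with the edges of $\Pi_E$ deleted is finite. Define $p_{\mathrm{cut,E}}=\sup\{p\ge0:\inf_{\Pi_E}\mathbb{E}_p[|C(x)\cap\Pi_E|]=0\}$, where $C(x)\cap\Pi_E$ is the set of (open) edges of $C(x)$ lying in $\Pi_E$ and the infimum is over all edge cutsets separating $x$ from infinity, and $p_{\mathrm{cut,V}}=\sup\{p\ge0:\inf_{\Pi_V}\mathbb{E}_p[|C(x)\cap\Pi_V|]=0\}$, where $C(x)\cap\Pi_V$ is the set of vertices of $C(x)$ in $\Pi_V$ and the infimum is over all vertex cutsets separating $x$ from infinity. *)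

(* Defs.v *)
From HB Require Import structures.
From mathcomp Require Import all_boot all_order all_algebra.
From mathcomp Require Import all_classical all_reals ereal.
From Stdlib Require Import Relation_Operators.
Set Implicit Arguments. Unset Strict Implicit. Unset Printing Implicit Defensive.
Import Order.TTheory GRing.Theory Num.Theory.
Local Open Scope classical_set_scope.
Local Open Scope ring_scope.

(* The multigraph G((a_n)): vertices are nat; its edges are the pairs (n, i)
   with i < a n, the edge (n, i) joining n and n.+1. The root vertex is x = 0. *)

Definition is_edge (a : nat -> nat) (e : nat * nat) : Prop := (e.2 < a e.1)%N.

Definition joins (e : nat * nat) (u v : nat) : Prop :=
  (u = e.1 /\ v = e.1.+1) \/ (u = e.1.+1 /\ v = e.1).

Definition adjE (a : nat -> nat) (S : set (nat * nat)) (u v : nat) : Prop :=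
  exists e, is_edge a e /\ ~ S e /\ joins e u v.

Definition adjV (a : nat -> nat) (T : set nat) (u v : nat) : Prop :=
  ~ T u /\ ~ T v /\ exists e, is_edge a e /\ joins e u v.

(* S is an edge cutset separating 0 from infinity: the component of 0 in G - S
   is finite *)
Definition edge_cutset (a : nat -> nat) (S : set (nat * nat)) : Prop :=
  S `<=` is_edge a /\
  exists N, forall v, clos_refl_trans nat (adjE a S) 0%N v -> (v < N)%N.

(* T is a vertex cutset separating 0 from infinity: the component of 0 in G - T
   (empty if 0 is in T) is finite *)
Definition vertex_cutset (a : nat -> nat) (T : set nat) : Prop :=
  exists N, forall v, ~ T 0%N -> clos_refl_trans nat (adjV a T) 0%N v -> (v < N)%N.

(* ---- Bernoulli(p) bond percolation on the finite truncations G_N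
   (vertices 0..N, all edges at levels < N). ---- *)

Definition edges_upto (a : nat -> nat) (N : nat) : seq (nat * nat) :=
  [seq (n, i) | n <- iota 0 N, i <- iota 0 (a n)].

Definition EN (a : nat -> nat) (N : nat) := seq_sub (edges_upto a N).

Definition config (a : nat -> nat) (N : nat) := {ffun EN a N -> bool}.

Definition weight (R : realType) (a : nat -> nat) (N : nat) (p : R)
  (w : config a N) : R :=
  \prod_(e : EN a N) (if w e then p else 1 - p).

Definition oadj (a : nat -> nat) (N : nat) (w : config a N) (u v : nat) : Prop :=
  exists e : EN a N, w e /\ joins (ssval e) u v.

Definition inC (a : nat -> nat) (N : nat) (w : config a N) (v : nat) : Prop :=
  clos_refl_trans nat (oadj w) 0%N v.

Definition countE (a : nat -> nat) (N : nat) (S : set (nat * nat))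
  (w : config a N) : nat :=
  #|[set e : EN a N | `[< w e /\ (inC w (ssval e).1 \/ inC w (ssval e).1.+1)
                          /\ S (ssval e) >]]|.

Definition countV (a : nat -> nat) (N : nat) (T : set nat)
  (w : config a N) : nat :=
  #|[set v : 'I_N.+1 | `[< inC w (nat_of_ord v) /\ T (nat_of_ord v) >]]|.

Definition expE_N (R : realType) (a : nat -> nat) (p : R) (S : set (nat * nat))
  (N : nat) : R :=
  \sum_(w : config a N) weight p w * (countE S w)%:R.

Definition expV_N (R : realType) (a : nat -> nat) (p : R) (T : set nat)
  (N : nat) : R :=
  \sum_(w : config a N) weight p w * (countV T w)%:R.

(* E_p[|C(0) ∩ S|] on the infinite graph: by monotone convergence it is the
   supremum (increasing limit) of the expectations on the truncations G_N,
   since C_N(0) increases to C(0). *)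
Definition expE (R : realType) (a : nat -> nat) (p : R) (S : set (nat * nat))
  : \bar R := ereal_sup (range (fun N => (expE_N a p S N)%:E)).

Definition expV (R : realType) (a : nat -> nat) (p : R) (T : set nat)
  : \bar R := ereal_sup (range (fun N => (expV_N a p T N)%:E)).

Definition p_cut_E (R : realType) (a : nat -> nat) : \bar R :=
  ereal_sup [set p%:E | p in [set p : R | 0 <= p <= 1 /\
     ereal_inf [set expE a p S | S in edge_cutset a] = 0%E]].

Definition p_cut_V (R : realType) (a : nat -> nat) : \bar R :=
  ereal_sup [set p%:E | p in [set p : R | 0 <= p <= 1 /\
     ereal_inf [set expV a p T | T in vertex_cutset a] = 0%E]].

(* Main.v *)
Require Import Defs.
From mathcomp Require Import all_boot all_order all_algebra.
From mathcomp Require Import all_classical all_reals ereal.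
From mathcomp Require Import ring lra.
From Stdlib Require Import Relation_Operators Operators_Properties.
Set Implicit Arguments. Unset Strict Implicit. Unset Printing Implicit Defensive.
Import Order.TTheory GRing.Theory Num.Theory.
Local Open Scope ring_scope.

Definition Ak (I : finType) (lev : I -> nat) (k : nat) (w : {ffun I -> bool}) : bool :=
  [forall n : 'I_k, [exists i, (lev i == n) && w i]].

Lemma AkS (I : finType) (lev : I -> nat) (k : nat) (w : {ffun I -> bool}) :
  Ak lev k.+1 w = Ak lev k w && [exists i, (lev i == k) && w i].
Proof.
rewrite /Ak; apply/forallP/andP => [H|[/forallP H1 H2] n].
  split; last exact: (H ord_max).
  by apply/forallP => n; exact: (H (widen_ord (leqnSn k) n)).
case: (ltnP n k) => hn; first exact: (H1 (Ordinal hn)).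
have -> : (n : nat) = k by apply/eqP; rewrite eqn_leq hn -ltnS ltn_ord.
exact: H2.
Qed.

Lemma prod_bool (R : realType) (I : finType) (P : pred I) (b : I -> bool) :
  \prod_(i | P i) ((b i)%:R : R) = ([forall i, P i ==> b i])%:R.
Proof.
case: (pickP (fun i => P i && ~~ b i)) => [i /andP[Pi nb] | H].
  rewrite (bigD1 i) //= (negbTE nb) mul0r.
  by case: forallP => // H; have := H i; rewrite Pi (negbTE nb).
have Hb : forall i, P i -> b i by move=> i Pi; have := H i; rewrite Pi /=; case: (b i).
rewrite big1; last by move=> i Pi; rewrite Hb.
by case: forallP => // H'; exfalso; apply: H' => i; apply/implyP; exact: Hb.
Qed.

Lemma indep (R : realType) (I : finType) (lev : I -> nat) (p : R) (k : nat) (h : I -> bool -> R) :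
  \sum_(w : {ffun I -> bool}) (\prod_i (if w i then p else 1 - p)) * ((Ak lev k w)%:R * \prod_i h i (w i))
  = (\prod_(i | (k <= lev i)%N) (p * h i true + (1 - p) * h i false)) *
    \prod_(n < k) (\prod_(i | lev i == n) (p * h i true + (1 - p) * h i false)
                   - \prod_(i | lev i == n) ((1 - p) * h i false)).
Proof.
elim: k h => [|k IH] h.
  have A0 : forall w, Ak lev 0 w = true by move=> w; apply/forallP => -[].
  rewrite (eq_bigr (fun w : {ffun I -> bool} => \prod_i ((if w i then p else 1 - p) * h i (w i)))); last first.
    by move=> w _; rewrite A0 mul1r big_split.
  rewrite -(bigA_distr_bigA (fun i (b : bool) => (if b then p else 1 - p) * h i b)) /= big_ord0 mulr1.
  by apply: eq_bigr => i _; rewrite big_bool /=.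
set h' := fun i b => if lev i == k then h i b * (~~ b)%:R else h i b.
have eS : forall w : {ffun I -> bool},
  (\prod_i (if w i then p else 1 - p)) * ((Ak lev k.+1 w)%:R * \prod_i h i (w i)) =
  (\prod_i (if w i then p else 1 - p)) * ((Ak lev k w)%:R * \prod_i h i (w i)) -
  (\prod_i (if w i then p else 1 - p)) * ((Ak lev k w)%:R * \prod_i h' i (w i)).
  move=> w.
  have -> : \prod_i h' i (w i) = (\prod_(i | lev i == k) ((~~ w i)%:R : R)) * \prod_i h i (w i).
    rewrite [X in _ = X * _]big_mkcond -big_split /=; apply: eq_bigr => i _; rewrite /h'.
    by case: (lev i == k); ring.
  rewrite prod_bool AkS.
  have -> : [forall i, (lev i == k) ==> ~~ w i] = ~~ [exists i, (lev i == k) && w i].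
    rewrite negb_exists; apply: eq_forallb => i; by case: (lev i == k); case: (w i).
  case: (Ak lev k w); case: [exists i, _]; rewrite /=; ring.
rewrite (eq_bigr _ (fun w _ => eS w)) sumrB !IH.
set c := fun i => p * h i true + (1 - p) * h i false.
set d := fun i => (1 - p) * h i false.
have c'E : forall i, p * h' i true + (1 - p) * h' i false = if lev i == k then d i else c i.
  by move=> i; rewrite /h' /c /d; case: (lev i == k) => /=; ring.
have d'E : forall i, (1 - p) * h' i false = d i.
  by move=> i; rewrite /h' /d; case: (lev i == k) => /=; ring.
have split : forall F : I -> R, \prod_(i | (k <= lev i)%N) F i =
    \prod_(i | lev i == k) F i * \prod_(i | (k < lev i)%N) F i.
  move=> F; rewrite (bigID (fun i => lev i == k)) /=; congr (_ * _).
    by apply: eq_bigl => i; case: eqP => [->|]; rewrite ?leqnn ?andbF ?andbT.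
  by apply: eq_bigl => i; rewrite ltn_neqAle eq_sym andbC.
rewrite !split.
have E1 : \prod_(i | lev i == k) (p * h' i true + (1 - p) * h' i false) = \prod_(i | lev i == k) d i.
  by apply: eq_bigr => i hi; rewrite c'E hi.
have E2 : \prod_(i | (k < lev i)%N) (p * h' i true + (1 - p) * h' i false) = \prod_(i | (k < lev i)%N) c i.
  by apply: eq_bigr => i hi; rewrite c'E gtn_eqF.
have E3 : \prod_(n < k) (\prod_(i | lev i == n) (p * h' i true + (1 - p) * h' i false)
                   - \prod_(i | lev i == n) ((1 - p) * h' i false)) =
          \prod_(n < k) (\prod_(i | lev i == n) c i - \prod_(i | lev i == n) d i).
  apply: eq_bigr => n _; congr (_ - _); apply: eq_bigr => i /eqP hi.
    by rewrite c'E hi (ltn_eqF (ltn_ord n)).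
  by rewrite d'E.
rewrite E1 E2 E3 big_ord_recr /=.
rewrite /c /d; ring.
Qed.

Lemma mem_edges (a : nat -> nat) (N : nat) (e : nat * nat) :
  (e \in edges_upto a N) = (e.1 < N)%N && (e.2 < a e.1)%N.
Proof.
apply/allpairsPdep/andP => [[n [i [hn hi ->]]] | [h1 h2]].
  by move: hn hi; rewrite !mem_iota /= !add0n.
by exists e.1, e.2; rewrite !mem_iota /= !add0n h1 h2; case: e h1 h2.
Qed.

Definition lev (a : nat -> nat) (N : nat) (e : EN a N) : nat := (ssval e).1.

Lemma cnt_le (a : nat -> nat) (N n : nat) :
  (#|[pred e : EN a N | lev e == n]| <= a n)%N.
Proof.
rewrite cardE -(size_map (fun e : EN a N => (ssval e).2)) -(size_iota 0 (a n)).
apply: uniq_leq_size.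
  rewrite map_inj_in_uniq ?enum_uniq // => e1 e2.
  rewrite !mem_enum !inE /lev => /eqP h1 /eqP h2 h; apply: val_inj => /=.
  by case: (ssval e1) h1 h => x1 y1; case: (ssval e2) h2 => x2 y2 /= -> -> ->.
move=> i /mapP[e]; rewrite mem_enum inE /lev => /eqP h ->.
have := ssvalP e; rewrite mem_edges => /andP[_]; rewrite h mem_iota add0n => ->.
by [].
Qed.

Lemma cnt_ge (a : nat -> nat) (N n : nat) : (n < N)%N ->
  (a n <= #|[pred e : EN a N | lev e == n]|)%N.
Proof.
move=> hn.
rewrite cardE -(size_map (fun e : EN a N => (ssval e).2)) -{1}(size_iota 0 (a n)).
apply: uniq_leq_size; first exact: iota_uniq.
move=> i; rewrite mem_iota add0n => hi.
have hm : (n, i) \in edges_upto a N by rewrite mem_edges /= hn hi.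
apply/mapP; exists (SeqSub hm) => //.
by rewrite mem_enum inE /lev /=.
Qed.

Lemma probA (R : realType) (I : finType) (lev : I -> nat) (p : R) (k : nat) :
  \sum_(w : {ffun I -> bool}) (\prod_i (if w i then p else 1 - p)) * (Ak lev k w)%:R
  = \prod_(n < k) (1 - (1 - p) ^+ #|[pred i | lev i == n]|).
Proof.
transitivity (\sum_(w : {ffun I -> bool}) (\prod_i (if w i then p else 1 - p)) *
   ((Ak lev k w)%:R * \prod_i (fun _ _ => (1 : R)) i (w i))).
  by apply: eq_bigr => w _; rewrite big1_eq mulr1.
rewrite (indep lev p k (fun _ _ => 1)); rewrite big1 ?mul1r; last by move=> i _; ring.
apply: eq_bigr => n _; congr (_ - _).
  by apply: big1 => i _; ring.
rewrite -prodr_const; apply: eq_big => // i _; ring.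
Qed.

Lemma inC_lev (a : nat -> nat) (N : nat) (w : config a N) v :
  inC w v -> forall n, (n < v)%N -> exists e : EN a N, w e /\ lev e = n.
Proof.
move=> h; move: (clos_rt_rtn1 _ _ _ _ h) => {h}; elim => [|y z [e [we hj]] _ IH] n hn //.
case: hj => -[hy hz]; last first.
  by apply: IH; rewrite hy; apply: (ltn_trans hn); rewrite hz.
case: (ltnP n y) => h; first exact: IH.
exists e; split => //; rewrite /lev; apply/eqP; by rewrite hz -hy in hn; rewrite eqn_leq -hy h /= -ltnS.
Qed.

Lemma Ak_inC (a : nat -> nat) (N : nat) (w : config a N) k :
  Ak (@lev a N) k w -> inC w k.
Proof.
elim: k => [|k IH]; first by move=> _; apply: rt_refl.
rewrite AkS => /andP[/IH hk /existsP[e /andP[/eqP he we]]].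
apply: rt_trans hk _; apply: rt_step; exists e; split => //; left.
by rewrite -he.
Qed.

Lemma inC_Ak (a : nat -> nat) (N : nat) (w : config a N) v k :
  inC w v -> (k <= v)%N -> Ak (@lev a N) k w.
Proof.
move=> hv hk; apply/forallP => n.
have [e [we he]] := inC_lev hv (leq_trans (ltn_ord n) hk).
by apply/existsP; exists e; rewrite he eqxx.
Qed.
Definition th (R : realType) (a : nat -> nat) (p : R) (k : nat) : R :=
  \prod_(n < k) (1 - (1 - p) ^+ a n).

Lemma thS (R : realType) (a : nat -> nat) (p : R) k :
  th a p k.+1 = th a p k * (1 - (1 - p) ^+ a k).
Proof. by rewrite /th big_ord_recr. Qed.

Lemma th_ge0 (R : realType) (a : nat -> nat) (p : R) k :
  0 <= p <= 1 -> 0 <= th a p k.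
Proof.
move=> /andP[p0 p1]; apply: prodr_ge0 => i _.
rewrite subr_ge0; apply: exprn_ile1; lra.
Qed.

Lemma th_mono (R : realType) (a : nat -> nat) (p : R) j m :
  0 <= p <= 1 -> th a p (j + m) <= th a p j.
Proof.
move=> hp; elim: m => [|m IH]; first by rewrite addn0.
rewrite addnS thS; apply: le_trans IH.
have h0 := th_ge0 a (j + m) hp.
have : 0 <= (1 - p) ^+ a (j + m) by apply: exprn_ge0; case/andP: hp => *; lra.
move=> h1; nra.
Qed.

Lemma bern (R : realType) (q d : R) (n : nat) :
  0 <= q <= 1 -> 0 <= d -> q ^+ n * n%:R * d <= (q + d) ^+ n.
Proof.
move=> /andP[q0 q1] d0; elim: n => [|n IH]; first by rewrite mulr0 mul0r expr0.
have X0 : 0 <= q ^+ n by apply: exprn_ge0.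
have XY : q ^+ n <= (q + d) ^+ n by apply: lerXn2r; rewrite ?nnegrE; lra.
rewrite !exprS -addn1 natrD.
set X := q ^+ n in IH X0 XY *; set Y := (q + d) ^+ n in IH XY *.
have N0 : 0 <= (n%:R : R) by [].
have h1 : q * (X * n%:R * d) <= q * Y by apply: ler_wpM2l.
have h2 : q * X * d <= Y * d.
  apply: ler_wpM2r => //; nra.
nra.
Qed.

Lemma prod_lb (R : realType) (v : nat -> R) (k0 m : nat) (t : nat -> R) :
  (forall n, t n.+1 = t n * (1 - v n)) -> (forall n, 0 <= v n <= 1) -> 0 <= t k0 ->
  t k0 * (1 - \sum_(n < m) v (k0 + n)%N) <= t (k0 + m)%N.
Proof.
move=> ht hv t0; elim: m => [|m IH]; first by rewrite big_ord0 subr0 addn0 mulr1.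
rewrite big_ord_recr /= addnS ht.
have := hv (k0 + m)%N; set V := v (k0 + m)%N. set S := \sum_(i < m) v (k0 + i)%N in IH *.
have S0 : 0 <= S by rewrite /S; apply: sumr_ge0 => i _; case/andP: (hv (k0 + i)%N).
move=> /andP[V0 V1]; set T := t (k0 + m)%N in IH *.
have h1 : t k0 * (1 - S) * (1 - V) <= T * (1 - V) by apply: ler_wpM2r; lra.
have h2 : 0 <= t k0 * S * V by rewrite mulr_ge0 // mulr_ge0.
nra.
Qed.

Lemma tele (R : realType) (u v t : nat -> R) (C : R) (k0 m : nat) :
  (forall n, t n.+1 = t n * (1 - u n)) -> (forall n, v n * C <= t n * u n) ->
  C * \sum_(n < m) v (k0 + n)%N <= t k0 - t (k0 + m)%N.
Proof.
move=> ht hv; elim: m => [|m IH]; first by rewrite big_ord0 mulr0 addn0 subrr.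
rewrite big_ord_recr /= addnS ht mulrDr.
have := hv (k0 + m)%N; set S := \sum_(i < m) v (k0 + i)%N in IH *.
move=> h; nra.
Qed.

Lemma analytic (R : realType) (a : nat -> nat) (p p' : R) :
  (forall n, (0 < a n)%N) -> 0 <= p' -> p' < p -> p <= 1 ->
  (forall e, 0 < e -> exists k, th a p k < e) ->
  forall e, 0 < e -> exists k, (a k)%:R * th a p' k < e.
Proof.
move=> apos p'0 p'p p1 hth c c0.
case: (pselect (exists k, (a k)%:R * th a p' k < c)) => // Hn; exfalso.
have Hc : forall k, c <= (a k)%:R * th a p' k.
  by move=> k; rewrite leNgt; apply/negP => hk; apply: Hn; exists k.
have hp' : 0 <= p' <= 1 by apply/andP; split; lra.
have hp : 0 <= p <= 1 by apply/andP; split; lra.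
set d := p - p'.
have d0 : 0 < d by rewrite /d; lra.
have key : forall n, (1 - p) ^+ a n * (c * d) <= th a p' n * (1 - p') ^+ a n.
  move=> n.
  have hb := @bern R (1 - p) d (a n).
  have e1 : 1 - p + d = 1 - p' by rewrite /d; ring.
  rewrite e1 in hb.
  have {}hb := hb ltac:(apply/andP; split; lra) ltac:(lra).
  have v0 : 0 <= (1 - p) ^+ a n by apply: exprn_ge0; lra.
  have t0 := th_ge0 a n hp'.
  have := Hc n; set V := (1 - p) ^+ a n in hb v0 *; set U := (1 - p') ^+ a n in hb *.
  set A := (a n)%:R in hb *; set T := th a p' n in t0 *.
  move=> h.
  have h1 : V * c * d <= V * (A * T) * d.
    apply: ler_wpM2r; first lra. by apply: ler_wpM2l.
  have h2 : T * (V * A * d) <= T * U by apply: ler_wpM2l.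
  nra.
have tl : forall k0 m, (c * d) * \sum_(n < m) (1 - p) ^+ a (k0 + n)%N <=
     th a p' k0 - th a p' (k0 + m)%N.
  move=> k0 m; apply: (@tele R (fun n => (1 - p') ^+ a n) (fun n => (1 - p) ^+ a n)).
    by move=> n; rewrite thS.
  by move=> n; apply: key.
case: (pselect (exists k0, th a p' k0 <= c * d / 2)).
  case=> k0 hk0.
  have sumle : forall m, \sum_(n < m) (1 - p) ^+ a (k0 + n)%N <= 1 / 2.
    move=> m; have := tl k0 m; have := th_ge0 a (k0 + m)%N hp'.
    set S := \sum_(n < m) _; move=> h1 h2.
    have cd0 : 0 < c * d by apply: mulr_gt0.
    rewrite -(ler_pM2l cd0); lra.
  have pos : 0 < th a p k0.
    apply: prodr_gt0 => i _; rewrite subr_gt0 exprn_ilt1; first by rewrite -lt0n.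
      lra. lra.
  have lb : forall m, th a p k0 / 2 <= th a p (k0 + m)%N.
    move=> m; have := @prod_lb R (fun n => (1 - p) ^+ a n) k0 m (th a p).
    move=> /(_ (fun n => thS a p n)).
    have hv : forall n, 0 <= (1 - p) ^+ a n <= 1.
      by move=> n; apply/andP; split; [apply: exprn_ge0 | apply: exprn_ile1]; lra.
    move=> /(_ hv (ltW pos)).
    have := sumle m; set S := \sum_(n < m) _ => h1 h2.
    have : th a p k0 * (1 / 2) <= th a p k0 * (1 - S) by apply: ler_wpM2l; lra.
    lra.
  have [k hk] := hth (th a p k0 / 2) ltac:(lra).
  case: (leqP k k0) => hk'.
    have := th_mono a k (k0 - k) hp; rewrite subnKC //; lra.
  have := lb (k - k0)%N; rewrite subnKC; [lra | exact: ltnW].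
move=> Hn2.
have [k hk] := hth (c * d / 2) ltac:(have := mulr_gt0 c0 d0; lra).
have h1 : th a p' k <= th a p k.
  apply: ler_prod => i _; apply/andP; split.
    rewrite subr_ge0; apply: exprn_ile1; lra.
  rewrite lerD2l lerN2; apply: lerXn2r; rewrite ?nnegrE; lra.
apply: Hn2; exists k; lra.
Qed.

Lemma weight_ge0 (R : realType) (a : nat -> nat) (N : nat) (p : R) (w : config a N) :
  0 <= p <= 1 -> 0 <= weight p w.
Proof.
move=> /andP[p0 p1]; apply: prodr_ge0 => e _; case: (w e) => //; lra.
Qed.

Lemma cnt_eq (a : nat -> nat) (N n : nat) : (n < N)%N ->
  #|[pred e : EN a N | lev e == n]| = a n.
Proof. by move=> h; apply/eqP; rewrite eqn_leq cnt_le cnt_ge. Qed.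

Lemma expVN_ge (R : realType) (a : nat -> nat) (p : R) (T : set nat) (k : nat) :
  0 <= p <= 1 -> T k -> th a p k <= expV_N a p T k.
Proof.
move=> hp Tk.
have -> : th a p k = \sum_(w : config a k) weight p w * (Ak (@lev a k) k w)%:R.
  rewrite /weight probA /th; apply: eq_bigr => n _; by rewrite cnt_eq.
apply: ler_sum => w _; apply: ler_wpM2l; first exact: weight_ge0.
rewrite ler_nat; case hA: (Ak (@lev a k) k w) => //=.
apply/card_gt0P; exists (Ordinal (ltnSn k)); rewrite inE; apply/asboolP; split => //.
exact: Ak_inC.
Qed.

Definition Sk (a : nat -> nat) (k : nat) : set (nat * nat) :=
  fun e => e.1 = k /\ (e.2 < a k)%N.

Lemma countE_le (a : nat -> nat) (N : nat) (w : config a N) k :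
  (countE (Sk a k) w <= a k * Ak (@lev a N) k w)%N.
Proof.
case hA: (Ak (@lev a N) k w); rewrite /= ?muln1 ?muln0.
  apply: leq_trans (cnt_le a N k); rewrite /countE; apply: subset_leq_card; apply/fintype.subsetP => e.
  by rewrite inE => /asboolP[_ [_ [h _]]]; rewrite inE /lev h.
rewrite leqn0 /countE; apply/eqP; apply: eq_card0 => e; rewrite [RHS]/= inE.
apply/negbTE/negP => /asboolP /= /asboolP [we [hC [h1 h2]]]; move: hA; case: hC => hC.
  by rewrite (inC_Ak hC) // h1.
by rewrite (inC_Ak hC) // h1.
Qed.

Lemma expEN_le (R : realType) (a : nat -> nat) (p : R) (k N : nat) :
  0 <= p <= 1 -> expE_N a p (Sk a k) N <= (a k)%:R * th a p k.
Proof.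
move=> hp; rewrite /expE_N.
apply: (@le_trans _ _ ((a k)%:R * \sum_(w : config a N) weight p w * (Ak (@lev a N) k w)%:R)).
  rewrite mulr_sumr; apply: ler_sum => w _.
  have -> : (a k)%:R * (weight p w * (Ak (@lev a N) k w)%:R) =
            weight p w * (a k * Ak (@lev a N) k w)%N%:R by rewrite natrM; ring.
  by apply: ler_wpM2l; [exact: weight_ge0 | rewrite ler_nat countE_le].
apply: ler_wpM2l => //.
rewrite /weight probA /th; apply: ler_prod => n _; case/andP: hp => p0 p1.
apply/andP; split.
  rewrite subr_ge0; apply: exprn_ile1; lra.
rewrite lerD2l lerN2; apply: ler_wiXn2l; [lra | lra | exact: cnt_le].
Qed.

Lemma vertex_has (a : nat -> nat) (T : set nat) :
  (forall n, (0 < a n)%N) -> vertex_cutset a T -> exists k, T k.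
Proof.
move=> apos [N hN]; case: (pselect (exists k, T k)) => // H; exfalso.
have nT : forall k, ~ T k by move=> k Tk; apply: H; exists k.
have reach : forall n, clos_refl_trans nat (adjV a T) 0%N n.
  elim => [|n IH]; first exact: rt_refl.
  apply: rt_trans IH _; apply: rt_step; split; [exact: nT | split; [exact: nT|]].
  by exists (n, 0%N); split; [rewrite /is_edge /= apos | left].
by have := hN N (nT 0%N) (reach N); rewrite ltnn.
Qed.

Lemma edge_Sk (a : nat -> nat) (k : nat) : edge_cutset a (Sk a k).
Proof.
split; first by move=> e [h1 h2]; rewrite /is_edge h1.
exists k.+1 => v h; rewrite ltnS.
move: (clos_rt_rtn1 _ _ _ _ h) => {h}; elim => [|y z [e [he [nS hj]]] _ IH] //.
case: hj => -[hy hz]; last by rewrite hz; apply: leq_trans (leqnSn _) _; rewrite -hy.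
rewrite hz -hy; rewrite leq_eqVlt in IH; case/orP: IH => // /eqP hyk.
exfalso; apply: nS; split; first by rewrite -hy.
by move: he; rewrite /is_edge -hy hyk.
Qed.

Local Open Scope ereal_scope.

Lemma V_to_th (R : realType) (a : nat -> nat) (p : R) :
  (forall n, (0 < a n)%N) -> (0 <= p <= 1)%R ->
  ereal_inf [set expV a p T | T in vertex_cutset a] = 0 ->
  forall e, (0 < e)%R -> exists k, (th a p k < e)%R.
Proof.
move=> apos hp hinf e e0.
case: (pselect (exists k, (th a p k < e)%R)) => // H; exfalso.
have : e%:E <= ereal_inf [set expV a p T | T in vertex_cutset a].
  apply/ereal_infP => y [T hT <-].
  have [k Tk] := vertex_has apos hT.
  have hk : (e <= th a p k)%R by rewrite leNgt; apply/negP => hk; apply: H; exists k.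
  apply: (@le_trans _ _ (expV_N a p T k)%:E).
    by rewrite lee_fin; apply: le_trans hk (expVN_ge a hp Tk).
  by apply: ereal_sup_ubound; exists k.
by rewrite hinf lee_fin leNgt e0.
Qed.

Lemma expEN_ge0 (R : realType) (a : nat -> nat) (p : R) S N :
  (0 <= p <= 1)%R -> (0 <= expE_N a p S N)%R.
Proof.
move=> hp; apply: sumr_ge0 => w _; apply: mulr_ge0 => //; exact: weight_ge0.
Qed.

Lemma E_from (R : realType) (a : nat -> nat) (p : R) :
  (0 <= p <= 1)%R ->
  (forall e, (0 < e)%R -> exists k, ((a k)%:R * th a p k < e)%R) ->
  ereal_inf [set expE a p S | S in edge_cutset a] = 0.
Proof.
move=> hp H.
have ge0 : 0 <= ereal_inf [set expE a p S | S in edge_cutset a].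
  apply/ereal_infP => y [S hS <-].
  apply: (@le_trans _ _ (expE_N a p S 0)%:E); first by rewrite lee_fin expEN_ge0.
  by apply: ereal_sup_ubound; exists 0%N.
have le : forall e, (0 < e)%R -> ereal_inf [set expE a p S | S in edge_cutset a] <= e%:E.
  move=> e e0; have [k hk] := H e e0.
  apply: (@le_trans _ _ (expE a p (Sk a k))).
    by apply: ereal_inf_lbound; exists (Sk a k) => //; exact: edge_Sk.
  apply/ereal_supP => y [N _ <-]; rewrite lee_fin; apply: le_trans (ltW hk).
  exact: expEN_le.
apply/eqP; rewrite eq_le ge0 andbT.
move: ge0 le; case: (ereal_inf _) => [r| |] //.
  move=> r0 hr; rewrite lee_fin leNgt; apply/negP => rpos.
  by have := hr (r / 2)%R ltac:(lra); rewrite lee_fin; lra.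
by move=> _ /(_ 1%R ltr01).
Qed.

Theorem proposition5p5 (R : realType) (a : nat -> nat) :
  (forall n, (0 < a n)%N) -> ~ (p_cut_E R a < p_cut_V R a)%E.
Proof.
move=> apos.
have E0 : 0 <= p_cut_E R a.
  apply: ereal_sup_ubound; exists 0%R => //; split; first by rewrite lexx ler01.
  apply: E_from; first by rewrite lexx ler01.
  move=> e e0; exists 1%N; rewrite /th big_ord_recr big_ord0 /= subr0 expr1n subrr.
  by rewrite !mulr0.
have key : forall p p' : R, (0 <= p <= 1)%R ->
    ereal_inf [set expV a p T | T in vertex_cutset a] = 0 ->
    (0 <= p')%R -> (p' < p)%R -> p'%:E <= p_cut_E R a.
  move=> p p' hp hinf p'0 p'p.
  have hp' : (0 <= p' <= 1)%R by case/andP: hp => *; apply/andP; split; lra.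
  apply: ereal_sup_ubound; exists p' => //; split => //.
  have p1 : (p <= 1)%R by case/andP: hp.
  apply: E_from => //; exact: (analytic apos p'0 p'p p1 (V_to_th apos hp hinf)).
have H : p_cut_V R a <= p_cut_E R a.
  apply/ereal_supP => y [p [hp hinf] <-].
  move: E0 (key p) ; case: (p_cut_E R a) => [r r0 hk | _ _ | r0 _]; last 2 first.
  - by rewrite leey.
  - by move: r0; rewrite leeNy_eq.
  rewrite lee_fin leNgt; apply/negP => rp.
  rewrite lee_fin in r0.
  by have := hk ((r + p) / 2)%R hp hinf ltac:(lra) ltac:(lra); rewrite lee_fin; lra.
by move=> hlt; have := lt_le_trans hlt H; rewrite ltxx.
Qed.
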